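(* Let $\Bbbk$ be a field, $n\ge2$, $q\in\Bbbk$ a primitive $n$-th root of unity, $T_n(q)$ the Taft algebra and $A$ a unital associative $\Bbbk$-algebra. Let $\cdot:T_n(q)\otimes A\to A$ be a linear map with $1\cdot1_A=1_A$ and $g^i\cdot1_A=0$ for all $1\le i<n$. Then $\cdot$ is a partial action of $T_n(q)$ on $A$ if and only if $(x\cdot1_A)^n\in Z(A)$ and $$g^{n-i}x^j\cdot a=(-1)^iq^{\frac{i(i+1)}{2}}\binom{j}{i}_q(x\cdot1_A)^{j-i}a(x\cdot1_A)^i$$ for all $a\in A$ and $0\le i,j<n$.
   Context: The Taft algebra $T_n(q)$ is the Hopf algebra generated by $g,x$ with relations $g^n=1$, $x^n=0$, $xg=qgx$ (so $g^n=1$), basis $\{g^ix^j:0\le i,j<n\}$, $g$ group-like, $\Delta(x)=x\otimes1+g\otimes x$, $\varepsilon(x)=0$. $Z(A)$ is the center of $A$. A partial action of a bialgebra $H$ on $A$ is a linear map $\cdot:H\otimes A\to A$ with $1_H\cdot a=a$, $h\cdot(ab)=(h_1\cdot a)(h_2\cdot b)$, $h\cdot(k\cdot a)=(h_1\cdot1_A)(h_2k\cdot a)$. $q$-binomials: $\binom{0}{0}_p=1$, $\binom{N}{m}_p=0$ if $m>N$ or $m<0$, and $\binom{N}{m}_p=\binom{N-1}{m-1}_p+p^m\binom{N-1}{m}_p$ for $N\ge1$, $0\le m\le N$. *)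

(* Defs.v *)
From HB Require Import structures.
From mathcomp Require Import all_boot all_order all_algebra.
Set Implicit Arguments. Unset Strict Implicit. Unset Printing Implicit Defensive.
Import GRing.Theory.
Local Open Scope ring_scope.

Fixpoint qbin {K : nzRingType} (p : K) (N m : nat) : K :=
  match N with
  | 0 => if m == 0%N then 1 else 0
  | N'.+1 => match m with
             | 0 => qbin p N' 0
             | m'.+1 => qbin p N' m' + p ^+ m * qbin p N' m
             end
  end.

(* The Taft algebra T_n(q) as a vector space: an element is its matrix of
   coordinates in the basis {g^i x^j : 0 <= i,j < n}, entry (i,j) being the
   coefficient of g^i x^j. *)
Definition taft (K : nzRingType) (n : nat) := 'M[K]_n.

(* tb n i j = the basis element g^i x^j, for arbitrary naturals i j:
   g^i = g^(i mod n) since g^n = 1, and x^j = 0 for j >= n. *)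
Definition tb {K : nzRingType} (n i j : nat) : taft K n :=
  \matrix_(r < n, c < n) (((r : nat) == (i %% n)%N) && ((c : nat) == j))%:R.

(* Multiplication of T_n(q): (g^i x^j)(g^k x^l) = q^(jk) g^(i+k) x^(j+l),
   since x g = q g x; extended bilinearly. *)
Definition tmul {K : nzRingType} (n : nat) (q : K) (h h' : taft K n) : taft K n :=
  \sum_(r < n) \sum_(c < n) \sum_(r' < n) \sum_(c' < n)
     (h r c * h' r' c' * q ^+ (c * r')%N) *: tb n (r + r')%N (c + c')%N.

(* Sweedler sum  sum F(h_(1), h_(2))  for a bilinear F : T x T -> A, where the
   coproduct of T_n(q) (Delta g = g (x) g, Delta x = x (x) 1 + g (x) x) is
   Delta(g^i x^j) = sum_(k=0..j) binom(j,k)_q g^(i+k) x^(j-k) (x) g^i x^k. *)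
Definition sweedler {K : comNzRingType} (n : nat) (q : K) (A : lmodType K)
    (F : taft K n -> taft K n -> A) (h : taft K n) : A :=
  \sum_(r < n) \sum_(c < n)
     h r c *: \sum_(k < c.+1) qbin q c k *: F (tb n (r + k)%N (c - k)%N) (tb n r k).

Definition is_partial_action {K : fieldType} (n : nat) (q : K) (A : algType K)
    (act : taft K n -> A -> A) : Prop :=
  [/\ forall a : A, act (tb n 0 0) a = a,
      forall (h : taft K n) (a b : A),
        act h (a * b) = sweedler q (fun h1 h2 => act h1 a * act h2 b) h
    & forall (h k : taft K n) (a : A),
        act h (act k a) = sweedler q (fun h1 h2 => act h1 1 * act (tmul q h2 k) a) h].

Definition in_center {K : fieldType} (A : algType K) (c : A) : Prop :=
  forall b : A, c * b = b * c.

(* Main.v *)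
Require Import Defs.
From HB Require Import structures.
From mathcomp Require Import all_boot all_order all_algebra.
From mathcomp Require Import ring zify.
From Stdlib Require Import FunctionalExtensionality.
Set Implicit Arguments. Unset Strict Implicit. Unset Printing Implicit Defensive.
Import GRing.Theory.
Local Open Scope ring_scope.


Lemma TS (i : nat) : ((i.+1 * i.+2)./2 = (i * i.+1)./2 + i.+1)%N.
Proof.
have -> : (i.+1 * i.+2 = i * i.+1 + (i.+1).*2)%N by rewrite -muln2; ring.
by rewrite halfD odd_double andbF add0n doubleK.
Qed.

Lemma qbin0 (K : nzRingType) (q : K) j : qbin q j 0 = 1.
Proof. by elim: j. Qed.

Lemma qbin_gt (K : nzRingType) (q : K) j i : (j < i)%N -> qbin q j i = 0.
Proof.
elim: j i => [|j IH] [|i] //= Hi.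
rewrite !IH ?mulr0 ?addr0 //; lia.
Qed.

Lemma qbinn (K : nzRingType) (q : K) j : qbin q j j = 1.
Proof. by elim: j => //= j ->; rewrite qbin_gt // mulr0 addr0. Qed.

Definition tcoef (K : nzRingType) (q : K) (i j : nat) : K :=
  (-1) ^+ i * q ^+ ((i * i.+1)./2) * qbin q j i.

Lemma tcoef_gt (K : nzRingType) (q : K) i j : (j < i)%N -> tcoef q i j = 0.
Proof. by move=> h; rewrite /tcoef qbin_gt // mulr0. Qed.

Lemma tcoef0 (K : nzRingType) (q : K) j : tcoef q 0 j = 1.
Proof. by rewrite /tcoef qbin0 !mulr1. Qed.

Lemma tcoef_rec (K : comNzRingType) (q : K) i j :
  q ^+ i.+1 * (tcoef q i.+1 j - tcoef q i j) = tcoef q i.+1 j.+1.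
Proof.
rewrite /tcoef TS exprD.
change (qbin q j.+1 i.+1) with (qbin q j i + q ^+ i.+1 * qbin q j i.+1).
set a := qbin q j i; set b := qbin q j i.+1; set t := q ^+ ((i * i.+1)./2).
rewrite !exprS ?expr0 ?mulr1; ring.
Qed.

Lemma qbin_prod (K : comNzRingType) (q : K) N k :
  qbin q (N + k) k * \prod_(t < k) (1 - q ^+ t.+1) =
  \prod_(t < k) (1 - q ^+ (N + t.+1)).
Proof.
elim: N k => [|N IHN] k.
  by rewrite add0n qbinn mul1r.
elim: k => [|k IHk].
  by rewrite addn0 qbin0 !big_ord0 mulr1.
rewrite addnS.
change (qbin q (N.+1 + k).+1 k.+1) with (qbin q (N.+1 + k) k + q ^+ k.+1 * qbin q (N.+1 + k) k.+1).
rewrite mulrDl.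
rewrite [X in qbin _ _ k * X]big_ord_recr mulrA IHk.
have H := IHN k.+1; rewrite addnS -addSn in H.
rewrite -mulrA H.
set P := \prod_(t < k) (1 - q ^+ (N.+1 + t.+1)).
have e1 : \prod_(t < k.+1) (1 - q ^+ (N + t.+1)) = (1 - q ^+ N.+1) * P.
  rewrite big_ord_recl addn1; congr (_ * _); apply: eq_bigr => t _.
  by rewrite lift0 addSnnS.
have e2 : \prod_(t < k.+1) (1 - q ^+ (N.+1 + t.+1)) = P * (1 - q ^+ (N.+1 + k.+1)).
  by rewrite big_ord_recr.
rewrite e1 e2 /=.
rewrite !exprD !exprS.
clearbody P.
have key : forall a b : K, P * (1 - q * b) + q * b * ((1 - q * a) * P) = P * (1 - q * a * (q * b)).
  by move=> *; ring.
Time exact (key (q ^+ N) (q ^+ k)).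
Qed.

Lemma qbin_n (K : fieldType) (q : K) n i :
  n.-primitive_root q -> (0 < i < n)%N -> qbin q n i = 0.
Proof.
move=> pq /andP [i0 iN].
have H := qbin_prod q (n - i) i.
have E : (n - i + i = n)%N by rewrite subnK // ltnW.
rewrite E in H.
case: i i0 iN E H => // i _ iN E.
rewrite [in RHS]big_ord_recr /=.
have E2 : (n - i.+1 + i.+1 = n)%N by [].
rewrite E2 prim_expr_order // subrr mulr0.
move/eqP; rewrite mulf_eq0 => /orP [/eqP //|].
move/prodf_eq0 => [t _]; rewrite subr_eq0 eq_sym -(expr0 q) (eq_prim_root_expr pq).
rewrite mod0n modn_small //; last by move: (ltn_ord t) => /= h; apply: (leq_ltn_trans h).
Qed.

Lemma tcoef_top (K : fieldType) (q : K) n :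
  n.-primitive_root q -> (0 < n)%N -> tcoef q n.-1 n.-1 = 1.
Proof.
move=> pq n0; rewrite /tcoef qbinn mulr1 prednK //.
have qn := prim_expr_order pq.
have nE := odd_double_half n.
set h := n./2 in nE.
case On: (odd n) nE => /= nE.
- have -> : (n.-1 * n)./2 = (h * n)%N.
    have -> : (n.-1 * n = (h * n).*2)%N by rewrite -!muln2; nia.
    by rewrite doubleK.
  have -> : n.-1 = (h * 2)%N by rewrite -muln2 in nE; lia.
  by rewrite [(h * 2)%N]mulnC exprM sqrrN !expr1n mul1r mulnC exprM qn expr1n.
- have h0 : (0 < h)%N by rewrite -muln2 in nE; lia.
  have qh : q ^+ h = -1.
    have nE' : n = (h * 2)%N by rewrite -muln2 in nE; lia.
    have : (q ^+ h) ^+ 2 = 1 by rewrite -exprM -nE' qn.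
    move/eqP; rewrite sqrf_eq1 => /orP [|/eqP //].
    rewrite -(expr0 q) (eq_prim_root_expr pq) mod0n modn_small //.
      by move/eqP => h00; rewrite h00 in h0.
    by rewrite -muln2 in nE; lia.
  have -> : (n.-1 * n)./2 = (n.-1 * h)%N.
    have -> : (n.-1 * n = (n.-1 * h).*2)%N by rewrite -!muln2; nia.
    by rewrite doubleK.
  by rewrite mulnC exprM qh -exprMn mulrNN mulr1 expr1n.
Qed.


Definition idx (n m : nat) : nat := ((n - m %% n) %% n)%N.

Definition Fm (K : fieldType) (q : K) (A : algType K) (y : A) (i j : nat) (a : A) : A :=
  tcoef q i j *: (y ^+ (j - i) * a * y ^+ i).

Lemma idx_lt n m : (0 < n)%N -> (idx n m < n)%N.
Proof. by move=> n0; rewrite /idx ltn_mod. Qed.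

Lemma idx0 n m : (0 < n)%N -> (idx n m == 0)%N = (m %% n == 0)%N.
Proof.
move=> n0; rewrite /idx.
have := ltn_mod m n; rewrite n0 => h.
case E: (m %% n)%N => [|k]; first by rewrite subn0 modnn.
rewrite modn_small; lia.
Qed.

Lemma idxS n m : (1 < n)%N ->
  idx n m.+1 = if (idx n m == 0)%N then n.-1 else (idx n m).-1.
Proof.
move=> n1; have n0 : (0 < n)%N by lia.
rewrite /idx -addn1 -modnDml.
have := ltn_mod m n; rewrite n0.
case E: (m %% n)%N => [|k] h.
  rewrite subn0 modnn /= add0n (modn_small (m := 1%N)) // modn_small; lia.
case: (ltnP (k.+2) n) => hk.
  rewrite (modn_small (m := (k.+1 + 1)%N)); last lia.
  rewrite (modn_small (m := (n - (k.+1+1))%N)); last lia.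
  rewrite (modn_small (m := (n - k.+1)%N)); last lia.
  have -> : (n - k.+1 == 0)%N = false by apply/eqP; lia.
  lia.
have -> : (k.+1 + 1 = n)%N by lia.
rewrite modnn subn0 modnn (modn_small (m := (n - k.+1)%N)); last lia.
have -> : (n - k.+1 = 1)%N by lia.
by [].
Qed.

Lemma idx_mod n m : idx n (m %% n) = idx n m.
Proof. by rewrite /idx modn_mod. Qed.

Lemma q_idx (K : fieldType) (q : K) n m : n.-primitive_root q -> (1 < n)%N ->
  q ^+ (idx n m) = q * q ^+ (idx n m.+1).
Proof.
move=> pq n1; rewrite idxS //.
case: eqP => [->|].
  rewrite expr0 -exprS prednK; [by rewrite prim_expr_order | lia].
by case: (idx n m) => // i _; rewrite exprS.
Qed.

Lemma C1 (K : fieldType) (q : K) (A : algType K) (y a : A) i j :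
  Fm q y i.+1 j.+1 a = q ^+ i.+1 *: (y * Fm q y i.+1 j a - Fm q y i j a * y).
Proof.
rewrite /Fm -tcoef_rec.
case: (ltnP j i) => hij.
  rewrite !tcoef_gt //; try lia.
  by rewrite subrr mulr0 !scale0r mulr0 mul0r subrr scaler0.
case: (ltnP i j) => hij2.
  have e1 : (j - i = (j - i.+1).+1)%N by lia.
  rewrite subSS e1 -scalerAr -scalerAl !mulrA -exprS -[_ * y ^+ i * y]mulrA -exprSr.
  by rewrite -scalerBl scalerA.
have -> : j = i by lia.
rewrite (@tcoef_gt _ q i.+1 i) // subnn !expr0 !mul1r scale0r mulr0 sub0r.
rewrite subnn expr0 mul1r sub0r -scalerAl -mulrA -exprSr scalerN scalerA.
by rewrite mulrN scaleNr.
Qed.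

Lemma DF (K : fieldType) (q : K) (A : algType K) (y a : A) n m j :
  (1 < n)%N -> (j.+1 < n)%N ->
  Fm q y (idx n m) j.+1 a =
  q ^+ (idx n m) *: (y * Fm q y (idx n m) j a - Fm q y (idx n m.+1) j a * y).
Proof.
move=> n1 jn; rewrite idxS //.
case: (idx n m) => [|i] /=; last exact: C1.
rewrite /Fm !tcoef0 !subn0 !expr0 !mulr1 !scale1r tcoef_gt; last lia.
by rewrite scale0r mul0r subr0 mulrA -exprS.
Qed.

Lemma DFn (K : fieldType) (q : K) (A : algType K) (y a : A) n m :
  n.-primitive_root q -> (1 < n)%N -> (forall b, y ^+ n * b = b * y ^+ n) ->
  q ^+ (idx n m) *: (y * Fm q y (idx n m) n.-1 a - Fm q y (idx n m.+1) n.-1 a * y) = 0.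
Proof.
move=> pq n1 cen.
have := idx_lt m (ltnW n1); rewrite idxS //.
case: (idx n m) => [|i] /= iN.
  rewrite /Fm tcoef0 (tcoef_top pq); last lia.
  rewrite !subn0 subnn !expr0 !mulr1 mul1r !scale1r mulrA -exprS prednK; last lia.
  by rewrite -mulrA -exprSr prednK ?cen ?subrr ?scaler0 //; lia.
rewrite -C1 prednK; last lia.
rewrite /Fm /tcoef (qbin_n pq); last by rewrite iN.
by rewrite mulr0 scale0r.
Qed.


Lemma tb_eq (K : nzRingType) n m1 m2 j : (m1 %% n = m2 %% n)%N ->
  tb n m1 j = tb n m2 j :> taft K n.
Proof. by move=> e; apply/matrixP => r c; rewrite !mxE e. Qed.

Lemma tb_big (K : nzRingType) n m j : (n <= j)%N -> tb n m j = 0 :> taft K n.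
Proof.
move=> nj; apply/matrixP => r c; rewrite !mxE.
have : (c : nat) != j by apply/eqP => e; move: (ltn_ord c); rewrite e; lia.
by move/negbTE => ->; rewrite andbF.
Qed.

Lemma tb_entry (K : nzRingType) n m j (r c : 'I_n) :
  (tb n m j : taft K n) r c = (((r : nat) == (m %% n)%N) && ((c : nat) == j))%:R.
Proof. by rewrite mxE. Qed.

Lemma tb_delta (K : nzRingType) n (r c : 'I_n) : tb n r c = delta_mx r c :> taft K n.
Proof.
apply/matrixP => r' c'; rewrite !mxE modn_small //.
Qed.

Lemma mx_decomp (K : nzRingType) n (h : taft K n) :
  h = \sum_(r < n) \sum_(c < n) h r c *: tb n r c.
Proof.
rewrite {1}(matrix_sum_delta h); apply: eq_bigr => r _; apply: eq_bigr => c _.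
by rewrite tb_delta.
Qed.

Lemma sum_pick2 (K : nzRingType) (V : lmodType K) n (R C : 'I_n) (F : 'I_n -> 'I_n -> V) :
  \sum_(r < n) \sum_(c < n) (((r : nat) == R) && ((c : nat) == C))%:R *: F r c = F R C.
Proof.
rewrite (bigD1 R) //= [X in X + _](bigD1 C) //= !eqxx scale1r.
rewrite [X in _ + X + _ = _]big1; last first.
  by move=> c hc; rewrite -val_eqE /= in hc; rewrite (negbTE hc) scale0r.
rewrite [X in _ + X = _]big1; first by rewrite !addr0.
move=> r hr; apply: big1 => c _.
by rewrite -val_eqE /= in hr; rewrite (negbTE hr) scale0r.
Qed.

Lemma sweedler_tb (K : comNzRingType) (q : K) n (A : lmodType K)
   (F : taft K n -> taft K n -> A) m j : (j < n)%N ->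
  sweedler q F (tb n m j) =
  \sum_(k < j.+1) qbin q j k *: F (tb n (m + k) (j - k)) (tb n m k).
Proof.
move=> jn.
have n0 : (0 < n)%N by lia.
rewrite /sweedler.
have := sum_pick2 (Ordinal (ltn_pmod m n0)) (Ordinal jn)
  (fun r c => \sum_(k < c.+1) qbin q c k *: F (tb n (r + k) (c - k)) (tb n r k)).
rewrite /= => E.
under eq_bigr => r _ do under eq_bigr => c _ do rewrite tb_entry.
rewrite E.
apply: eq_bigr => k _; congr (_ *: F _ _); apply: tb_eq.
  by rewrite modnDml.
by rewrite modn_mod.
Qed.

Lemma tmul_lin (K : nzRingType) (q : K) n (h kk : taft K n) :
  tmul q h kk = \sum_(r0 < n) \sum_(c0 < n) h r0 c0 *:
     \sum_(r' < n) \sum_(c' < n) (kk r' c' * q ^+ (c0 * r')) *: tb n (r0 + r') (c0 + c').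
Proof.
rewrite /tmul; apply: eq_bigr => r0 _; apply: eq_bigr => c0 _.
rewrite scaler_sumr; apply: eq_bigr => r1 _.
rewrite scaler_sumr; apply: eq_bigr => c1 _.
by rewrite scalerA !mulrA.
Qed.

Lemma tmul_tb (K : nzRingType) (q : K) n r t (kk : taft K n) : (t < n)%N ->
  tmul q (tb n r t) kk =
  \sum_(r' < n) \sum_(c' < n) (kk r' c' * q ^+ (t * r')) *: tb n (r + r') (t + c').
Proof.
move=> tn; have n0 : (0 < n)%N by lia.
rewrite tmul_lin.
under eq_bigr => r0 _ do under eq_bigr => c0 _ do rewrite tb_entry.
rewrite (sum_pick2 (Ordinal (ltn_pmod r n0)) (Ordinal tn)
  (fun r0 c0 => \sum_(r' < n) \sum_(c' < n) (kk r' c' * q ^+ (c0 * r')) *: tb n (r0 + r') (c0 + c'))) /=.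
apply: eq_bigr => r' _; apply: eq_bigr => c' _; congr (_ *: _); apply: tb_eq.
by rewrite modnDml.
Qed.

Lemma tmul_tb_tb (K : nzRingType) (q : K) n r t r' c' : (t < n)%N -> (c' < n)%N ->
  tmul q (tb n r t) (tb n r' c') = q ^+ (t * (r' %% n)) *: tb n (r + r') (t + c').
Proof.
move=> tn cn; have n0 : (0 < n)%N by lia.
rewrite tmul_tb //.
under eq_bigr => r0 _ do under eq_bigr => c0 _ do rewrite tb_entry -scalerA.
rewrite (sum_pick2 (Ordinal (ltn_pmod r' n0)) (Ordinal cn)
  (fun r0 c0 => q ^+ (t * r0) *: tb n (r + r0) (t + c0))) /=.
congr (_ *: _); apply: tb_eq.
by rewrite modnDmr.
Qed.


Definition linL (K : fieldType) n (A : algType K) (act : taft K n -> A -> A) :=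
  forall (c : K) (h1 h2 : taft K n) (a : A), act (c *: h1 + h2) a = c *: act h1 a + act h2 a.
Definition linR (K : fieldType) n (A : algType K) (act : taft K n -> A -> A) :=
  forall (h : taft K n) (c : K) (a b : A), act h (c *: a + b) = c *: act h a + act h b.


Lemma actL0 (K : fieldType) n (A : algType K) (act : taft K n -> A -> A) :
  linL act -> forall a, act 0 a = 0.
Proof.
move=> H a; have := H 1 0 0 a; rewrite scaler0 addr0 scale1r => e.
by apply: (@addrI _ (act 0 a)); rewrite addr0 -e.
Qed.

Lemma actLD (K : fieldType) n (A : algType K) (act : taft K n -> A -> A) :
  linL act -> forall h1 h2 a, act (h1 + h2) a = act h1 a + act h2 a.
Proof. by move=> H h1 h2 a; have := H 1 h1 h2 a; rewrite !scale1r. Qed.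

Lemma actLZ (K : fieldType) n (A : algType K) (act : taft K n -> A -> A) :
  linL act -> forall c h a, act (c *: h) a = c *: act h a.
Proof. by move=> H c h a; have := H c h 0 a; rewrite addr0 actL0 // addr0. Qed.

Lemma actL_sum (K : fieldType) n (A : algType K) (act : taft K n -> A -> A) (I : Type) (s : seq I) (P : pred I) (F : I -> taft K n) a :
  linL act -> act (\sum_(i <- s | P i) F i) a = \sum_(i <- s | P i) act (F i) a.
Proof.
move=> H; apply: (big_morph (fun h => act h a)) => [x y|]; [exact: actLD | exact: actL0].
Qed.

Lemma act_expand (K : fieldType) n (A : algType K) (act : taft K n -> A -> A) h a :
  linL act -> act h a = \sum_(r < n) \sum_(c < n) h r c *: act (tb n r c) a.
Proof.
move=> H; rewrite {1}(mx_decomp h) actL_sum //; apply: eq_bigr => r _.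
rewrite actL_sum //; apply: eq_bigr => c _; exact: actLZ.
Qed.

Lemma actR0 (K : fieldType) n (A : algType K) (act : taft K n -> A -> A) :
  linR act -> forall h, act h 0 = 0.
Proof.
move=> H h; have := H h 1 0 0; rewrite scaler0 addr0 scale1r => e.
by apply: (@addrI _ (act h 0)); rewrite addr0 -e.
Qed.

Lemma actRD (K : fieldType) n (A : algType K) (act : taft K n -> A -> A) :
  linR act -> forall h a b, act h (a + b) = act h a + act h b.
Proof. by move=> H h a b; have := H h 1 a b; rewrite !scale1r. Qed.

Lemma actRZ (K : fieldType) n (A : algType K) (act : taft K n -> A -> A) :
  linR act -> forall h c a, act h (c *: a) = c *: act h a.
Proof. by move=> H h c a; have := H h c a 0; rewrite addr0 actR0 // addr0. Qed.

Lemma actR_sum (K : fieldType) n (A : algType K) (act : taft K n -> A -> A) (I : Type) (s : seq I) (P : pred I) (F : I -> A) h :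
  linR act -> act h (\sum_(i <- s | P i) F i) = \sum_(i <- s | P i) act h (F i).
Proof.
move=> H; apply: (big_morph (fun a => act h a)) => [x y|]; [exact: actRD | exact: actR0].
Qed.


Lemma idx_sub n i : (i < n)%N -> idx n (n - i) = i.
Proof.
move=> iN; rewrite /idx.
case: i iN => [|i] iN; first by rewrite subn0 modnn subn0 modnn.
rewrite (modn_small (m := (n - i.+1)%N)); last lia.
rewrite modn_small; lia.
Qed.

Lemma idx_0 n : idx n 0 = 0%N.
Proof. by rewrite /idx mod0n subn0 modnn. Qed.

Lemma idx_1 n : (1 < n)%N -> idx n 1 = n.-1.
Proof. move=> n1; rewrite /idx (modn_small (m := 1%N)) // modn_small; lia. Qed.

Lemma qexp0 (K : fieldType) (q : K) n m : n.-primitive_root q -> (0 < n)%N ->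
  q ^+ (m %% n) * q ^+ (idx n m) = 1.
Proof.
move=> pq n0; rewrite -exprD -(prim_expr_mod pq) /idx modnDmr subnKC.
  by rewrite modnn expr0.
by apply: ltnW; rewrite ltn_mod.
Qed.

Lemma qexp1 (K : fieldType) (q : K) n m : n.-primitive_root q -> (1 < n)%N ->
  q ^+ (m.+1 %% n) * q ^+ (idx n m) = q.
Proof.
move=> pq n1; rewrite (q_idx m pq n1) mulrCA qexp0 ?mulr1 //; lia.
Qed.

Lemma sw2 (K : comNzRingType) (q : K) n (A : lmodType K)
   (F : taft K n -> taft K n -> A) m : (1 < n)%N ->
  sweedler q F (tb n m 1) = F (tb n m 1) (tb n m 0) + F (tb n m.+1 0) (tb n m 1).
Proof.
move=> n1; rewrite sweedler_tb //.
rewrite big_ord_recl big_ord_recl big_ord0 addr0 /=.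
by rewrite mulr0 addr0 !scale1r addn0 subn0 /bump /= addn1.

Qed.

Lemma idx_nz n m : (0 < n)%N -> (m %% n != 0)%N -> idx n m = (n - m %% n)%N.
Proof.
move=> n0 h; rewrite /idx modn_small //.
have := ltn_pmod m n0; lia.
Qed.

Lemma forward (K : fieldType) n (q : K) (A : algType K) (act : taft K n -> A -> A) :
  (1 < n)%N -> n.-primitive_root q -> linL act -> linR act ->
  act (tb n 0 0) 1 = 1 ->
  (forall i : nat, (1 <= i < n)%N -> act (tb n i 0) 1 = 0) ->
  is_partial_action q act ->
  (forall b, (act (tb n 0 1) 1) ^+ n * b = b * (act (tb n 0 1) 1) ^+ n) /\
  (forall j, (j < n)%N -> forall m a, act (tb n m j) a = Fm q (act (tb n 0 1) 1) (idx n m) j a).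
Proof.
move=> n1 pq HL HR H00 Hg [PA1 PA2 PA3].
set y := act (tb n 0 1) 1.
have n0 : (0 < n)%N by lia.
have q0 : q != 0.
  apply/eqP => q0; move: (prim_expr_order pq); rewrite q0 expr0n.
  have -> : (n == 0)%N = false by apply/eqP; lia.
  by move/eqP; rewrite eq_sym oner_eq0.
have tbmod : forall m j, tb n m j = tb n (m %% n) j :> taft K n.
  by move=> m j; apply: tb_eq; rewrite modn_mod.
have Hg' : forall m, (m %% n != 0)%N -> act (tb n m 0) 1 = 0.
  move=> m hm; rewrite tbmod; apply: Hg; have := ltn_pmod m n0; lia.
have G0 : forall m a, act (tb n m 0) a = if (m %% n == 0)%N then a else 0.
  move=> m a; case: eqP => hm.
    by rewrite (@tb_eq K n m 0 0) ?mod0n.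
  have := PA2 (tb n m 0) a 1; rewrite mulr1 sweedler_tb // big_ord1 /=.
  by rewrite addn0 subn0 scale1r Hg' ?mulr0 //; apply/eqP.
have G0F : forall m a, act (tb n m 0) a = Fm q y (idx n m) 0 a.
  move=> m a; rewrite G0 /Fm -(idx0 m n0).
  case: (idx n m) => [|i] /=; first by rewrite tcoef0 !expr0 mulr1 mul1r scale1r.
  by rewrite tcoef_gt // scale0r.
have mod1 : (1 %% n = 1)%N by rewrite modn_small.
have act1 : forall b, act (tb n 0 1) b = y * b.
  move=> b; have := PA2 (tb n 0 1) 1 b; rewrite mul1r sw2 // => ->.
  by rewrite !G0 mod0n mod1 /= mul0r addr0.
have tbn : forall j, tb n n j = tb n 0 j :> taft K n.
  by move=> j; apply: tb_eq; rewrite modnn mod0n.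
have z1 : act (tb n n.-1 1) 1 = - (q *: y).
  have := PA3 (tb n n.-1 1) (tb n 1 0) 1; rewrite sw2 //.
  rewrite G0 mod1 /= actR0 //.
  rewrite !tmul_tb_tb // !actLZ // mod1 /= expr0 expr1 scale1r !addn1 !addn0 prednK // !tbn H00 -/y mul1r mulr1.
  move/eqP; rewrite eq_sym addr_eq0 => /eqP ->.
  by [].
have G1nm1 : forall m b, (m %% n = n.-1)%N -> act (tb n m 1) b = - (q *: (b * y)).
  move=> m b hm; have := PA2 (tb n m 1) b 1; rewrite mulr1 sw2 // => ->.
  rewrite !G0 hm.
  have -> : (n.-1 == 0)%N = false by apply/eqP; lia.
  have -> : (m.+1 %% n == 0)%N.
    by rewrite -addn1 -modnDml hm addn1 prednK // modnn.
  rewrite mulr0 add0r (@tb_eq K n m n.-1 1); last by rewrite hm modn_small // ltn_predL.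
  by rewrite z1 mulrN scalerAr.
have G1 : forall m a, act (tb n m 1) a = Fm q y (idx n m) 1 a.
  move=> m a.
  have mn := ltn_pmod m n0.
  case: (m %% n =P 0)%N => h0.
    rewrite (@tb_eq K n m 0 1) ?h0 ?mod0n // act1 /Fm -idx_mod h0 idx_0 tcoef0.
    by rewrite subn0 expr1 expr0 mulr1 scale1r.
  case: (m %% n =P n.-1)%N => h1.
    rewrite G1nm1 // /Fm -idx_mod h1 -subn1 idx_sub; last lia.
    rewrite /tcoef /= mulr0 addr0 mulr1 !expr1 subnn expr0 mul1r mulN1r.
    by rewrite scaleNr.
  have := PA2 (tb n m 1) 1 a; rewrite mul1r sw2 // => ->.
  have h0p : (m %% n != 0)%N by apply/eqP.
  rewrite !G0 (negbTE h0p).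
  have -> : (m.+1 %% n == 0)%N = false.
    rewrite -addn1 -modnDml modn_small; [apply/eqP; lia | lia].
  rewrite mulr0 mul0r addr0 /Fm tcoef_gt ?scale0r //.
  rewrite (idx_nz n0 h0p); lia.
have GR : forall m j a, (j < n)%N ->
    q ^+ (m.+1 %% n) *: act (tb n m j.+1) a = q *: (y * act (tb n m j) a - act (tb n m.+1 j) a * y).
  move=> m j a jn.
  have := PA3 (tb n n.-1 1) (tb n m.+1 j) a; rewrite sw2 //.
  rewrite G1nm1; last by rewrite modn_small // ltn_predL.
  rewrite !tmul_tb_tb // !actLZ // z1 prednK // tbn H00 mul0n expr0 scale1r mul1n mul1r.
  have e1 : forall jj, tb n (n.-1 + m.+1) jj = tb n m jj :> taft K n.
    by move=> jj; apply: tb_eq; rewrite addnS -addSn prednK // addnC modnDr.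
  rewrite !e1 add0n add1n => e.
  have -> : q ^+ (m.+1 %% n) *: act (tb n m j.+1) a =
      - (q *: (act (tb n m.+1 j) a * y)) - (- (q *: y) * act (tb n m j) a).
    by rewrite e addrAC subrr add0r.
  by rewrite mulNr opprK scalerBr -scalerAl addrC.
have FA : forall j, (j < n)%N -> forall m a, act (tb n m j) a = Fm q y (idx n m) j a.
  elim=> [|j IH] jn m a; first exact: G0F.
  have jn' : (j < n)%N by lia.
  have e := GR m j a jn'; rewrite !IH // in e.
  apply: (scalerI (expf_neq0 (m.+1 %% n) q0)).
  by rewrite e DF // scalerA qexp1.
split => //.
move=> b; have := GR 0%N n.-1 b; rewrite prednK //.
rewrite tb_big // actL0 // scaler0 !FA ?ltn_predL // idx_0 idx_1 //.
rewrite /Fm tcoef0 (tcoef_top pq n0) !scale1r subn0 subnn !expr0 mulr1 mul1r.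
move=> /(_ (leqnn n)) /esym /eqP; rewrite scaler_eq0 (negbTE q0) /= subr_eq0 => /eqP.
by rewrite mulrA -exprS prednK // -mulrA -exprSr prednK.
Qed.


Definition uu (K : fieldType) (q : K) n (A : algType K) (y : A) (m : nat) : A :=
  q ^+ (idx n m) *: y.

Definition dlt (K : fieldType) (q : K) n (A : algType K) (y : A) (f : nat -> A) : nat -> A :=
  fun m => uu q n y m * f m - f m.+1 * uu q n y m.

Definition inj0 (K : fieldType) (A : algType K) n (a : A) : nat -> A :=
  fun m => if (m %% n == 0)%N then a else 0.

Lemma D_formula (K : fieldType) (q : K) n (A : algType K) (y a : A) :
  n.-primitive_root q -> (1 < n)%N ->
  forall j, (j < n)%N -> forall m, iter j (dlt q n y) (inj0 n a) m = Fm q y (idx n m) j a.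
Proof.
move=> pq n1; have n0 : (0 < n)%N by lia.
elim=> [|j IH] jn m /=.
  rewrite /inj0 /Fm -(idx0 m n0).
  case: (idx n m) => [|i] /=; first by rewrite tcoef0 !expr0 mulr1 mul1r scale1r.
  by rewrite tcoef_gt // scale0r.
rewrite {1}/dlt !IH; try lia.
rewrite DF // /uu -scalerAl scalerBr; congr (_ - _); by rewrite scalerAr.
Qed.

Lemma D_n (K : fieldType) (q : K) n (A : algType K) (y a : A) :
  n.-primitive_root q -> (1 < n)%N -> (forall b, y ^+ n * b = b * y ^+ n) ->
  forall m, iter n (dlt q n y) (inj0 n a) m = 0.
Proof.
move=> pq n1 cen m.
have E : n = n.-1.+1 by rewrite prednK // ltnW.
transitivity (iter n.-1.+1 (dlt q n y) (inj0 n a) m); first by rewrite -E.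
rewrite /= {1}/dlt !D_formula // ?ltn_predL; try lia.
rewrite -(DFn a m pq n1 cen) /uu -scalerAl scalerBr; congr (_ - _); by rewrite scalerAr.
Qed.

Lemma iter_dlt0 (K : fieldType) (q : K) n (A : algType K) (y : A) k :
  iter k (dlt q n y) (fun _ => 0) = (fun _ => 0).
Proof.
elim: k => //= k ->; apply: functional_extensionality => m.
by rewrite /dlt mulr0 mul0r subrr.
Qed.

Lemma D_big (K : fieldType) (q : K) n (A : algType K) (y a : A) :
  n.-primitive_root q -> (1 < n)%N -> (forall b, y ^+ n * b = b * y ^+ n) ->
  forall N, (n <= N)%N -> iter N (dlt q n y) (inj0 n a) = (fun _ => 0).
Proof.
move=> pq n1 cen N nN.
rewrite -(subnK nN) iterD.
have -> : iter n (dlt q n y) (inj0 n a) = (fun _ => 0).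
  by apply: functional_extensionality => m; apply: D_n.
exact: iter_dlt0.
Qed.

Lemma u_shift (K : fieldType) (q : K) n (A : algType K) (y : A) m r :
  n.-primitive_root q -> (1 < n)%N -> q ^+ r *: uu q n y (m + r) = uu q n y m.
Proof.
move=> pq n1; elim: r => [|r IH]; first by rewrite expr0 scale1r addn0.
rewrite -IH exprSr -scalerA; congr (_ *: _).
by rewrite /uu addnS scalerA -q_idx.
Qed.

Lemma dlt_scale (K : fieldType) (q : K) n (A : algType K) (y : A) c f :
  dlt q n y (fun m => c *: f m) = fun m => c *: dlt q n y f m.
Proof.
apply: functional_extensionality => m.
by rewrite /dlt scalerBr scalerAr scalerAl.
Qed.

Lemma dlt_shift (K : fieldType) (q : K) n (A : algType K) (y : A) f r :
  n.-primitive_root q -> (1 < n)%N ->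
  dlt q n y (fun m => f (m + r)%N) = fun m => q ^+ r *: dlt q n y f (m + r)%N.
Proof.
move=> pq n1; apply: functional_extensionality => m.
rewrite /dlt -(u_shift y m r pq n1) scalerBr -scalerAl -scalerAr addSn.
by [].
Qed.

Lemma iter_shift (K : fieldType) (q : K) n (A : algType K) (y : A) f r t :
  n.-primitive_root q -> (1 < n)%N ->
  iter t (dlt q n y) (fun m => f (m + r)%N) =
  fun m => q ^+ (t * r) *: iter t (dlt q n y) f (m + r)%N.
Proof.
move=> pq n1; elim: t => [|t IH] /=.
  by apply: functional_extensionality => m; rewrite mul0n expr0 scale1r.
rewrite IH dlt_scale (dlt_shift _ _ _ pq n1); apply: functional_extensionality => m.
by rewrite scalerA -exprD mulSn addnC.
Qed.

Lemma pascal_split (K : comNzRingType) (q : K) (V : lmodType K) j (T : nat -> V) :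
  \sum_(k < j.+2) qbin q j.+1 k *: T k =
  \sum_(k < j.+1) (q ^+ k * qbin q j k) *: T k + \sum_(k < j.+1) qbin q j k *: T k.+1.
Proof.
rewrite big_ord_recl /=.
have bp : forall k, bump 0 k = k.+1 by [].
under eq_bigr => k _ do rewrite !bp add0n scalerDl.
rewrite big_split /= [X in _ + X = _]addrC addrA; congr (_ + _).
rewrite [RHS]big_ord_recl /= expr0 mul1r qbin0; congr (_ + _).
rewrite [LHS]big_ord_recr /= qbin_gt // mulr0 scale0r addr0.
by apply: eq_bigr => k _; rewrite !bp.
Qed.

Lemma leibniz (K : fieldType) (q : K) n (A : algType K) (y : A) f g :
  n.-primitive_root q -> (1 < n)%N ->
  forall j m, iter j (dlt q n y) (fun t => f t * g t) m =
  \sum_(k < j.+1) qbin q j k *: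
     (iter (j - k) (dlt q n y) f (m + k)%N * iter k (dlt q n y) g m).
Proof.
move=> pq n1; elim=> [|j IH] m.
  by rewrite big_ord1 /= addn0 scale1r.
rewrite (pascal_split q j (fun k : nat => iter (j.+1 - k) (dlt q n y) f (m + k)%N * iter k (dlt q n y) g m)).
rewrite [LHS]/= {1}/dlt !IH mulr_sumr mulr_suml -sumrB -big_split /=.
apply: eq_bigr => k _.
have kj : (k <= j)%N by rewrite -ltnS.
rewrite subSS (subSn kj) /= addnS addSn.
have dltE : forall F x, dlt q n y F x = uu q n y x * F x - F x.+1 * uu q n y x by [].
rewrite !dltE -(u_shift y m k pq n1).
set c := qbin q j k; set Q := q ^+ k; set U := uu q n y (m + k).
set X := iter (j - k) _ f (m + k)%N; set X' := iter (j - k) _ f (m + k).+1.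
set G := iter k _ g m; set G' := iter k _ g m.+1.
rewrite !mulrBl !mulrBr -!scalerAl -!scalerAr !scalerA !scalerBr !mulrA [c * Q]mulrC.
rewrite -!scalerAl !scalerA !mulrA.
set w := q ^+ idx n (m + k).
have e1 : Q * w * c = Q * c * w by rewrite -!mulrA [w * c]mulrC.
have e2 : c * Q * w = Q * c * w by rewrite [c * Q]mulrC.
rewrite e1 e2 -!mulrA addrA.
by rewrite subrK.
Qed.


Lemma mod_idx n m : (0 < n)%N -> (m %% n = (n - idx n m) %% n)%N.
Proof.
move=> n0; case: (m %% n =P 0)%N => h.
  have : (idx n m == 0)%N by rewrite idx0 // h.
  by move/eqP => ->; rewrite h subn0 modnn.
have h' : (m %% n != 0)%N by apply/eqP.
rewrite (idx_nz n0 h') subKn ?modn_mod //.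
by apply: ltnW; rewrite ltn_mod.
Qed.

Lemma backward (K : fieldType) n (q : K) (A : algType K) (act : taft K n -> A -> A) :
  (1 < n)%N -> n.-primitive_root q -> linL act -> linR act ->
  (forall b, (act (tb n 0 1) 1) ^+ n * b = b * (act (tb n 0 1) 1) ^+ n) ->
  (forall a i j, (i < n)%N -> (j < n)%N ->
      act (tb n (n - i) j) a = Fm q (act (tb n 0 1) 1) i j a) ->
  is_partial_action q act.
Proof.
move=> n1 pq HL HR.
set y := act (tb n 0 1) 1 => cen HF.
have n0 : (0 < n)%N by lia.
set D := dlt q n y.
have FA : forall m j a, (j < n)%N -> act (tb n m j) a = Fm q y (idx n m) j a.
  move=> m j a jn; rewrite (@tb_eq K n m (n - idx n m) j); last exact: mod_idx.
  by apply: HF => //; apply: idx_lt.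
have AD : forall m N a, act (tb n m N) a = iter N D (inj0 n a) m.
  move=> m N a; case: (ltnP N n) => hN.
    by rewrite FA // D_formula.
  by rewrite tb_big // actL0 // D_big.
have inj0M : forall a b : A, inj0 n (a * b) = fun t => inj0 n a t * inj0 n b t.
  move=> a b; rewrite /inj0; apply: functional_extensionality => t.
  by case: ifP => _; rewrite ?mulr0.
split.
- by move=> a; rewrite AD /= /inj0 mod0n.
- move=> h a b; rewrite act_expand // /sweedler.
  apply: eq_bigr => r _; apply: eq_bigr => c _; congr (_ *: _).
  rewrite AD inj0M leibniz //; apply: eq_bigr => k _.
  by rewrite !AD.
have core : forall r c r' c' a, (c < n)%N -> (r' < n)%N -> (c' < n)%N ->
    act (tb n r c) (act (tb n r' c') a) =
    \sum_(t < c.+1) qbin q c t *: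
       (act (tb n (r + t) (c - t)) 1 * (q ^+ (t * r') *: act (tb n (r + r') (t + c')) a)).
  move=> r c r' c' a cn rn c'n.
  set H := iter c' D (inj0 n a).
  have Ei : inj0 n (act (tb n r' c') a) = fun m => inj0 n 1 m * (fun m => H (m + r')%N) m.
    rewrite /inj0; apply: functional_extensionality => m /=.
    case: ifP => hm; last by rewrite mul0r.
    rewrite mul1r /H -!AD (@tb_eq K n (m + r') r' c') //.
    by rewrite -modnDml (eqP hm) add0n.
  rewrite AD Ei leibniz //; apply: eq_bigr => t _.
  rewrite (iter_shift _ _ _ _ pq n1) -iterD !AD.
  by [].
move=> h kk a; rewrite act_expand // /sweedler.
apply: eq_bigr => r _; apply: eq_bigr => c _; congr (_ *: _).
have cn := ltn_ord c.
transitivity (\sum_(r' < n) \sum_(c' < n) kk r' c' *: \sum_(t < c.+1) qbin q c t *: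
       (act (tb n (r + t) (c - t)) 1 * (q ^+ (t * r') *: act (tb n (r + r') (t + c')) a))).
  rewrite [act kk a](act_expand _ _ HL) actR_sum //; apply: eq_bigr => r' _.
  rewrite actR_sum //; apply: eq_bigr => c' _.
  by rewrite actRZ // core.
have Et : forall t : 'I_c.+1,
   qbin q c t *: (act (tb n (r + t) (c - t)) 1 * act (tmul q (tb n r t) kk) a) =
   \sum_(r' < n) \sum_(c' < n) kk r' c' *: (qbin q c t *:
       (act (tb n (r + t) (c - t)) 1 * (q ^+ (t * r') *: act (tb n (r + r') (t + c')) a))).
  move=> t; have tn : (t < n)%N by have := ltn_ord t; lia.
  rewrite tmul_tb // actL_sum // mulr_sumr scaler_sumr; apply: eq_bigr => r' _.
  rewrite actL_sum // mulr_sumr scaler_sumr; apply: eq_bigr => c' _.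
  rewrite actLZ // -scalerA -scalerAr scalerA mulrC -scalerA.
  by [].
rewrite (eq_bigr _ (fun t _ => Et t)) [RHS]exchange_big; apply: eq_bigr => r' _.
rewrite [RHS]exchange_big; apply: eq_bigr => c' _.
by rewrite scaler_sumr.
Qed.

Theorem corollary3p11 (K : fieldType) (n : nat) (q : K) (A : algType K)
    (act : taft K n -> A -> A) :
  (2 <= n)%N ->
  n.-primitive_root q ->
  (* act is bilinear, i.e. a linear map T_n(q) (x) A -> A *)
  (forall (c : K) (h1 h2 : taft K n) (a : A),
      act (c *: h1 + h2) a = c *: act h1 a + act h2 a) ->
  (forall (h : taft K n) (c : K) (a b : A),
      act h (c *: a + b) = c *: act h a + act h b) ->
  act (tb n 0 0) 1 = 1 ->
  (forall i : nat, (1 <= i < n)%N -> act (tb n i 0) 1 = 0) ->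
  (is_partial_action q act <->
   (in_center ((act (tb n 0 1) 1) ^+ n) /\
    forall (a : A) (i j : nat), (i < n)%N -> (j < n)%N ->
      act (tb n (n - i) j) a =
        ((-1) ^+ i * q ^+ ((i * i.+1)./2) * qbin q j i) *:
          ((act (tb n 0 1) 1) ^+ (j - i) * a * (act (tb n 0 1) 1) ^+ i))).
Proof.
move=> n1 pq HL HR H00 Hg; split.
- move=> PA; have [cen FA] := forward n1 pq HL HR H00 Hg PA.
  split; first exact: cen.
  move=> a i j iN jN; rewrite FA // idx_sub //.
- move=> [cen HF]; apply: backward => //.
Qed.
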